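(* Let $\Omega\subseteq\mathbb{R}^n$ be open, let $F:\Omega\times\mathbb{R}^N\times\mathbb{R}^{N\times n}\times(\mathbb{R}^N\otimes\mathbb{R}^{n\times n}_s)\to\mathbb{R}^N$ be locally bounded, and let $u:\Omega\to\mathbb{R}^N$ be continuous. Consider the system $F(x,u,Du,D^2u)=0$ on $\Omega$. (a) If $u$ is a contact solution of this system and $F$ is continuous, then at every point $x\in\Omega$ at which $u$ is twice differentiable we have $F(x,u(x),Du(x),D^2u(x))=0$. (b) If $u$ is twice differentiable at every point of $\Omega$ with $F(x,u(x),Du(x),D^2u(x))=0$ for all $x\in\Omega$, and $F$ is degenerate elliptic, then $u$ is a contact solution of the system.
   Context: Notation: summation over repeated indices; Greek indices run over $1,\dots,N$, Latin over $1,\dots,n$. $\mathbb{R}^{n\times n}_s$ denotes symmetric $n\times n$ matrices; $\mathbb{R}^N\otimes\mathbb{R}^{n\times n}_s$ is the space of arrays $\mathbf{X}=(\mathbf{X}_{\alpha ij})$ with $\mathbf{X}_{\alpha ij}=\mathbf{X}_{\alpha ji}$, and $\mathbf{X}:z\otimes z\in\mathbb{R}^N$ has components $\mathbf{X}_{\alpha ij}z_iz_j$. For $a,b\in\mathbb{R}^N$, $a\vee b:=\frac12(a\otimes b+b\otimes a)$, a symmetric $N\times N$ matrix; inequalities between symmetric matrices are in the sense of quadratic forms. $\mathbb{S}^{N-1}$ is the unit sphere of $\mathbb{R}^N$; for $\xi\in\mathbb{R}^N$, $\xi^\top v$ is the Euclidean inner product. Second contact jet: for continuous $u:\Omega\to\mathbb{R}^N$,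 $x\in\Omega$, $\xi\in\mathbb{S}^{N-1}$, $J^{2,\xi}u(x)$ is the set of $(P,\mathbf{X})\in\mathbb{R}^{N\times n}\times(\mathbb{R}^N\otimes\mathbb{R}^{n\times n}_s)$ such that there is a continuous $T:\mathbb{R}^n\setminus\{0\}\to\mathbb{R}^{N\times N}_s$ with $|T(y)|\to0$ as $y\to0$ and $\xi\vee[u(z)-u(x)-P(z-x)-\frac12\mathbf{X}:(z-x)\otimes(z-x)]\le |z-x|^2T(z-x)$ for all $z\neq x$ close to $x$. Its closure $\bar J^{2,\xi}u(x)$ is the set of $(P,\mathbf{X})$ for which there exist $\xi_m\in\mathbb{S}^{N-1}$, $x_m\in\Omega$, $(P_m,\mathbf{X}_m)\in J^{2,\xi_m}u(x_m)$ with $(\xi_m,x_m,P_m,\mathbf{X}_m)\to(\xi,x,P,\mathbf{X})$. $\xi$-envelope: $\xi^*F(x,\eta,P,\mathbf{X}):=\limsup_{\varepsilon\to0}\sup\{\xi^\top F(y,\theta,Q,\mathbf{Y}):|x-y|+|\eta-\theta|+|P-Q|+|\mathbf{X}-\mathbf{Y}|\le\varepsilon\}$. Contact solution: the continuous $u$ is a contact solution of $F(\cdot,u,Du,D^2u)=0$ on $\Omega$ if for all $x\in\Omega$, $\xi\in\mathbb{S}^{N-1}$ and $(P,\mathbf{X})\in\bar J^{2,\xi}u(x)$ we have $\xi^*F(x,u(x),P,\mathbf{X})\ge0$. Degenerate ellipticity: $F$ is degenerate elliptic if for all $(x,\eta,P)$ and all $\mathbf{X},\mathbf{Y}\in\mathbb{R}^N\otimes\mathbb{R}^{n\times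 n}_s$ the symmetric $n\times n$ matrix with entries $\big(F_\alpha(x,\eta,P,\mathbf{X})-F_\alpha(x,\eta,P,\mathbf{Y})\big)(\mathbf{X}-\mathbf{Y})_{\alpha ij}$ is positive semidefinite. *)

(* Defs.v *)
From HB Require Import structures.
From mathcomp Require Import all_boot all_order all_algebra.
From mathcomp Require Import boolp classical_sets reals constructive_ereal ereal.
Set Implicit Arguments. Unset Strict Implicit. Unset Printing Implicit Defensive.
Import Order.TTheory GRing.Theory Num.Theory.
Local Open Scope ring_scope.
Local Open Scope classical_set_scope.

Section Defs.
Variable R : realType.

Definition nrm (T : finType) (f : T -> R) : R := Num.sqrt (\sum_(i : T) f i ^+ 2).
Definition vsub (T : finType) (f g : T -> R) : T -> R := fun i => f i - g i.
Definition dist (T : finType) (f g : T -> R) : R := nrm (vsub f g).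
Definition dot (T : finType) (f g : T -> R) : R := \sum_(i : T) f i * g i.
Definition zerov (T : finType) : T -> R := fun _ => 0.

Definition vec (n : nat) := 'I_n -> R.
Definition mat (N n : nat) := ('I_N * 'I_n)%type -> R.
Definition arr (N n : nat) := ('I_N * 'I_n * 'I_n)%type -> R.

Definition symarr N n (X : arr N n) : Prop := forall a i j, X (a, i, j) = X (a, j, i).
Definition symmx N (A : ('I_N * 'I_N)%type -> R) : Prop := forall a b, A (a, b) = A (b, a).

Definition mv N n (P : mat N n) (h : vec n) : vec N := fun a => \sum_(i < n) P (a, i) * h i.
Definition quad N n (X : arr N n) (h : vec n) : vec N :=
  fun a => \sum_(i < n) \sum_(j < n) X (a, i, j) * h i * h j.

Definition vee N (a b : vec N) : ('I_N * 'I_N)%type -> R :=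
  fun p => (a p.1 * b p.2 + b p.1 * a p.2) / 2.
Definition qform N (A : ('I_N * 'I_N)%type -> R) (w : vec N) : R :=
  \sum_(a < N) \sum_(b < N) A (a, b) * w a * w b.
Definition mxle N (A B : ('I_N * 'I_N)%type -> R) : Prop :=
  forall w : vec N, qform A w <= qform B w.
Definition mxscale N (c : R) (A : ('I_N * 'I_N)%type -> R) : ('I_N * 'I_N)%type -> R :=
  fun p => c * A p.

Definition is_open n (Om : vec n -> Prop) : Prop :=
  forall x, Om x -> exists e, 0 < e /\ forall y, dist y x < e -> Om y.

Definition cont_on n N (Om : vec n -> Prop) (u : vec n -> vec N) : Prop :=
  forall x, Om x -> forall e, 0 < e -> exists d, 0 < d /\
    forall z, Om z -> dist z x < d -> dist (u z) (u x) < e.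

Definition jet2 N n (Om : vec n -> Prop) (u : vec n -> vec N) (xi : vec N) (x : vec n)
    (P : mat N n) (X : arr N n) : Prop :=
  symarr X /\
  exists T : vec n -> ('I_N * 'I_N)%type -> R,
    (forall y : vec n, y <> (@zerov 'I_n) -> symmx (T y)) /\
    (forall y : vec n, y <> (@zerov 'I_n) -> forall e, 0 < e -> exists d, 0 < d /\
       forall y' : vec n, y' <> (@zerov 'I_n) -> dist y' y < d -> dist (T y') (T y) < e) /\
    (forall e, 0 < e -> exists d, 0 < d /\
       forall y : vec n, y <> (@zerov 'I_n) -> nrm y < d -> nrm (T y) < e) /\
    (exists d, 0 < d /\ forall z, Om z -> z <> x -> dist z x < d ->
       mxle (vee xi (fun a => u z a - u x a - mv P (vsub z x) a
                              - 2^-1 * quad X (vsub z x) a))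
            (mxscale (nrm (vsub z x) ^+ 2) (T (vsub z x)))).

Definition seqcv (T : finType) (s : nat -> T -> R) (l : T -> R) : Prop :=
  forall e, 0 < e -> exists M, forall m, (M <= m)%N -> dist (s m) l < e.

Definition jet2bar N n (Om : vec n -> Prop) (u : vec n -> vec N) (xi : vec N) (x : vec n)
    (P : mat N n) (X : arr N n) : Prop :=
  exists (xis : nat -> vec N) (xs : nat -> vec n) (Ps : nat -> mat N n) (Xs : nat -> arr N n),
    (forall m, nrm (xis m) = 1 /\ Om (xs m) /\ jet2 Om u (xis m) (xs m) (Ps m) (Xs m)) /\
    seqcv xis xi /\ seqcv xs x /\ seqcv Ps P /\ seqcv Xs X.

(* xi-envelope:  limsup_{e -> 0} sup{ xi^T F(y,th,Q,Y) : |x-y|+|eta-th|+|P-Q|+|X-Y| <= e },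
   the limsup of the nondecreasing function e |-> sup{...} written as inf over e > 0;
   (y,th,Q,Y) ranges over the domain Om x R^N x R^{N x n} x (R^N (x) R^{n x n}_s) of F. *)
Definition env N n (Om : vec n -> Prop) (F : vec n -> vec N -> mat N n -> arr N n -> vec N)
    (xi : vec N) (x : vec n) (eta : vec N) (P : mat N n) (X : arr N n) : \bar R :=
  ereal_inf [set ereal_sup [set r | exists y th Q Y, Om y /\ symarr Y /\
                 dist x y + dist eta th + dist P Q + dist X Y <= e /\
                 r = (dot xi (F y th Q Y))%:E] | e in [set e : R | 0 < e]].

Definition contact_sol N n (Om : vec n -> Prop) (F : vec n -> vec N -> mat N n -> arr N n -> vec N)
    (u : vec n -> vec N) : Prop :=
  forall x xi P X, Om x -> nrm xi = 1 -> jet2bar Om u xi x P X ->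
    (0 <= env Om F xi x (u x) P X)%E.

Definition loc_bounded N n (Om : vec n -> Prop) (F : vec n -> vec N -> mat N n -> arr N n -> vec N) : Prop :=
  forall x eta P X, Om x -> symarr X -> exists e M, 0 < e /\
    forall y th Q Y, Om y -> symarr Y ->
      dist x y + dist eta th + dist P Q + dist X Y <= e -> nrm (F y th Q Y) <= M.

Definition F_continuous N n (Om : vec n -> Prop) (F : vec n -> vec N -> mat N n -> arr N n -> vec N) : Prop :=
  forall x eta P X, Om x -> symarr X -> forall e, 0 < e -> exists d, 0 < d /\
    forall y th Q Y, Om y -> symarr Y ->
      dist x y + dist eta th + dist P Q + dist X Y < d -> dist (F y th Q Y) (F x eta P X) < e.

Definition degenerate_elliptic N n (Om : vec n -> Prop) (F : vec n -> vec N -> mat N n -> arr N n -> vec N) : Prop :=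
  forall x eta P X Y, Om x -> symarr X -> symarr Y ->
    forall w : vec n, 0 <= \sum_(i < n) \sum_(j < n)
       (\sum_(a < N) (F x eta P X a - F x eta P Y a) * (X (a, i, j) - Y (a, i, j))) * w i * w j.

Definition is_deriv (T : finType) n (g : vec n -> T -> R) (x : vec n) (L : (T * 'I_n)%type -> R) : Prop :=
  forall e, 0 < e -> exists d, 0 < d /\ forall z, dist z x < d ->
    nrm (fun t => g z t - g x t - \sum_(j < n) L (t, j) * (z j - x j)) <= e * dist z x.

(* u is twice differentiable at x (differentiable near x, Du differentiable at x),
   with Du the first derivative (near x) and D2 = D(Du)(x) = D^2u(x), D2 (a,i,j) = d_j d_i u_a *)
Definition twice_diff_at N n (u : vec n -> vec N) (x : vec n) (Du : vec n -> mat N n) (D2 : arr N n) : Prop :=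
  (exists d, 0 < d /\ forall z, dist z x < d -> is_deriv u z (Du z)) /\ is_deriv Du x D2.

End Defs.

(* Main.v *)
Require Import Defs.
From HB Require Import structures.
From mathcomp Require Import all_boot all_order all_algebra.
From mathcomp Require Import boolp classical_sets reals constructive_ereal ereal.
From mathcomp Require Import ring lra.
Import Order.TTheory GRing.Theory Num.Theory.
Local Open Scope ring_scope.
Local Open Scope classical_set_scope.
Set Implicit Arguments. Unset Strict Implicit. Unset Printing Implicit Defensive.
Section Norms.
Variable R : realType.
Implicit Types (T : finType).

Lemma sumsq_ge0 T (f : T -> R) : 0 <= \sum_i f i ^+ 2.
Proof. by apply: sumr_ge0 => i _; exact: sqr_ge0. Qed.

Lemma nrm_ge0 T (f : T -> R) : 0 <= nrm f.
Proof. exact: sqrtr_ge0. Qed.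

Lemma nrm_sq T (f : T -> R) : nrm f ^+ 2 = \sum_i f i ^+ 2.
Proof. by rewrite /nrm sqr_sqrtr // sumsq_ge0. Qed.

Lemma abs_le_nrm T (f : T -> R) i : `|f i| <= nrm f.
Proof.
rewrite /nrm -sqrtr_sqr; apply: ler_wsqrtr.
rewrite (bigD1 i) //= lerDl; apply: sumr_ge0 => j _; exact: sqr_ge0.
Qed.

Lemma nrm_le_sum T (f : T -> R) : nrm f <= \sum_i `|f i|.
Proof.
have h0 : 0 <= \sum_i `|f i| by apply: sumr_ge0 => i _.
rewrite /nrm -(ger0_norm h0) -sqrtr_sqr; apply: ler_wsqrtr.
rewrite expr2 mulr_suml; apply: ler_sum => i _.
rewrite -(real_normK (num_real (f i))) expr2; apply: ler_wpM2l => //.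
by rewrite (bigD1 i) //= lerDl; apply: sumr_ge0.
Qed.

Lemma nrm_scale T (f : T -> R) c : nrm (fun i => c * f i) = `|c| * nrm f.
Proof.
rewrite /nrm.
have -> : \sum_i (c * f i) ^+ 2 = c ^+ 2 * \sum_i f i ^+ 2.
  by rewrite mulr_sumr; apply: eq_bigr => i _; rewrite exprMn.
by rewrite sqrtrM ?sqr_ge0 // sqrtr_sqr.
Qed.

Lemma nrm_eq0 T (f : T -> R) : nrm f = 0 -> forall i, f i = 0.
Proof.
move=> h i; apply/normr0_eq0/le_anti; rewrite normr_ge0 andbT.
by rewrite -h abs_le_nrm.
Qed.

Lemma nrm_le_const T (f : T -> R) c : (forall i, `|f i| <= c) -> nrm f <= #|T|%:R * c.
Proof.
move=> h; apply: (le_trans (nrm_le_sum f)).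
rewrite mulr_natl -sumr_const; apply: ler_sum => i _; exact: h.
Qed.

Lemma CS T (f g : T -> R) : (\sum_i f i * g i) ^+ 2 <= (\sum_i f i ^+ 2) * (\sum_i g i ^+ 2).
Proof.
set A := \sum_i f i ^+ 2; set S := \sum_i f i * g i; set B := \sum_i g i ^+ 2.
have A0 : 0 <= A by exact: sumsq_ge0.
have B0 : 0 <= B by exact: sumsq_ge0.
have key t : 0 <= t ^+ 2 * A - 2 * t * S + B.
  have -> : t ^+ 2 * A - 2 * t * S + B = \sum_i (t * f i - g i) ^+ 2.
    rewrite /A /S /B !mulr_sumr -sumrN -!big_split /=.
    by apply: eq_bigr => i _; ring.
  exact: sumsq_ge0.
have [Az|Ap] := eqVneq A 0.
  have fz : forall i, f i = 0.
    move=> i; apply: (@nrm_eq0 _ f); by rewrite /nrm -/A Az sqrtr0.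
  rewrite /S big1 ?expr0n ?mulr0n //=; last by move=> i _; rewrite fz mul0r.
  by rewrite Az mul0r.
have Apos : 0 < A by rewrite lt_def Ap A0.
have := key (S / A).
have -> : (S / A) ^+ 2 * A - 2 * (S / A) * S + B = B - S ^+ 2 / A.
  by field; rewrite Ap.
rewrite subr_ge0 ler_pdivrMr // => h; by rewrite mulrC.
Qed.

Lemma dot_le T (f g : T -> R) : `|\sum_i f i * g i| <= nrm f * nrm g.
Proof.
rewrite /nrm -sqrtrM ?sumsq_ge0 // -sqrtr_sqr; apply: ler_wsqrtr; exact: CS.
Qed.

Lemma nrm_add T (f g : T -> R) : nrm (fun i => f i + g i) <= nrm f + nrm g.
Proof.
have h0 : 0 <= nrm f + nrm g by rewrite addr_ge0 ?nrm_ge0.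
rewrite {1}/nrm -(ger0_norm h0) -sqrtr_sqr; apply: ler_wsqrtr.
have -> : \sum_i (f i + g i) ^+ 2 = \sum_i f i ^+ 2 + 2 * \sum_i f i * g i + \sum_i g i ^+ 2.
  rewrite mulr_sumr -!big_split /=; apply: eq_bigr => i _; ring.
rewrite sqrrD !nrm_sq lerD2r lerD2l.
have := dot_le f g => h.
have h2 := le_trans (ler_norm _) h.
rewrite -mulr_natr; lra.
Qed.

Lemma nrm_opp T (f : T -> R) : nrm (fun i => - f i) = nrm f.
Proof. by rewrite /nrm; congr Num.sqrt; apply: eq_bigr => i _; rewrite sqrrN. Qed.

Lemma nrm_ext T (f g : T -> R) : (forall i, f i = g i) -> nrm f = nrm g.
Proof. by move=> h; rewrite (funext h). Qed.

Lemma dist_sym T (f g : T -> R) : dist f g = dist g f.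
Proof. rewrite /dist -nrm_opp; apply: nrm_ext => i; rewrite /vsub opprB. by []. Qed.

Lemma dist_tri T (f g h : T -> R) : dist f h <= dist f g + dist g h.
Proof.
rewrite /dist; apply: le_trans (nrm_add _ _); rewrite le_eqVlt; apply/orP; left.
apply/eqP; apply: nrm_ext => i; rewrite /vsub; ring.
Qed.

Lemma dist_ge0 T (f g : T -> R) : 0 <= dist f g.
Proof. exact: nrm_ge0. Qed.

Lemma dist_abs T (f g : T -> R) i : `|f i - g i| <= dist f g.
Proof. exact: (abs_le_nrm (vsub f g) i). Qed.

Lemma nrm_sub_le T (f g : T -> R) : nrm f <= nrm g + dist f g.
Proof.
rewrite /dist; apply: le_trans (nrm_add _ _); rewrite le_eqVlt; apply/orP; left.
apply/eqP; apply: nrm_ext => i; rewrite /vsub; ring.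
Qed.

Lemma dist_self T (f : T -> R) : dist f f = 0.
Proof.
rewrite /dist /nrm big1 ?sqrtr0 // => i _; by rewrite /vsub subrr expr0n.
Qed.

End Norms.

Section MVI.
Variable R : realType.

Lemma small2 (a b : R) : 0 < a -> 0 < b -> exists m, 0 < m /\ m <= a /\ m <= b.
Proof.
move=> ha hb; exists (Order.min a b); rewrite lt_min ha hb !ge_min !lexx orbT.
by [].
Qed.

Definition dAt (f : R -> R) (t d : R) := forall e, 0 < e -> exists del, 0 < del /\
  forall s, `|s - t| < del -> `|f s - f t - d * (s - t)| <= e * `|s - t|.

Lemma MVI (f f' : R -> R) (K : R) :
  (forall t, 0 <= t <= 1 -> dAt f t (f' t)) ->
  (forall t, 0 <= t <= 1 -> `|f' t| <= K) -> `|f 1 - f 0| <= K.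
Proof.
move=> hd hK.
have K0 : 0 <= K by apply: le_trans (hK 0 _); rewrite ?lexx ?ler01.
apply/ler_addgt0Pr => eta eta0.
set L := K + eta.
set S := [set s : R | 0 <= s <= 1 /\ forall t, 0 <= t <= s -> `|f t - f 0| <= L * t].
have S0 : S 0.
  split; first by rewrite lexx ler01.
  move=> t /andP[t0 t1]; have -> : t = 0 by apply/le_anti; rewrite t0 t1.
  by rewrite subrr normr0 mulr0.
have Sub : has_ubound S by exists 1 => s [/andP[_ ->]].
have Ssup : has_sup S by split; [exists 0|].
set c := sup S.
have c0 : 0 <= c by apply: ub_le_sup.
have c1 : c <= 1 by apply: ge_sup; [exists 0 | move=> s [/andP[_ ->]]].
have cA : forall t, 0 <= t -> t < c -> `|f t - f 0| <= L * t.
  move=> t t0 tc.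
  have ct : 0 < c - t by rewrite subr_gt0.
  have [s [_ hs] lt] := sup_adherent ct Ssup.
  apply: hs; rewrite t0 /=; rewrite /c in lt; lra.
have cB : `|f c - f 0| <= L * c.
  have [cz|cp] := eqVneq c 0.
    by rewrite cz subrr normr0 mulr0.
  have cpos : 0 < c by rewrite lt_def cp c0.
  apply/ler_addgt0Pr => eps eps0.
  have c01 : 0 <= c <= 1 by rewrite c0 c1.
  have [del [del0 hdel]] := hd c c01 1 ltr01.
  have [m [m0 [m1 m2]]] := small2 (divr_gt0 del0 (ltr0n _ 2)) cpos.
  have K1 : 0 < K + 1 by lra.
  have [m' [m'0 [m'1 m'2]]] := small2 m0 (divr_gt0 eps0 K1).
  set t := c - m'.
  have t0 : 0 <= t by rewrite /t; lra.
  have tc : t < c by rewrite /t; lra.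
  have h1 := cA t t0 tc.
  have etc : t - c = - m' by rewrite /t; ring.
  have htc : `|t - c| < del by rewrite etc normrN gtr0_norm //; lra.
  have h2 := hdel t htc.
  rewrite etc normrN (gtr0_norm m'0) mul1r in h2.
  have h3 : `|f' c * (t - c)| <= K * m'.
    rewrite normrM etc normrN (gtr0_norm m'0); apply: ler_wpM2r; [lra|exact: hK].
  have em : m' * (K + 1) <= eps by rewrite -ler_pdivlMr.
  have L0 : 0 <= L by rewrite /L; lra.
  have h4 : L * t <= L * c by apply: ler_wpM2l => //; lra.
  move: h1 => /ler_normlP [h1a h1b]. move: h2 => /ler_normlP [h2a h2b]. move: h3 => /ler_normlP [h3a h3b].
  rewrite Num.Theory.ler_norml; apply/andP; split; nra.
have c1' : c = 1.
  apply/le_anti; rewrite c1 /=; rewrite leNgt; apply/negP => clt.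
  have c01 : 0 <= c <= 1 by rewrite c0 c1.
  have [del [del0 hdel]] := hd c c01 eta eta0.
  have c1p : 0 < 1 - c by rewrite subr_gt0.
  have [m [m0 [m1 m2]]] := small2 (divr_gt0 del0 (ltr0n _ 2)) c1p.
  have del2 : del / 2 < del by rewrite ltr_pdivrMr // ltr_pMr // ltr1n.
  have Ss : S (c + m).
    split; first by apply/andP; split; lra.
    move=> t /andP[t0 tcm].
    have [tlc|tgc] := ltP t c; first exact: cA.
    have [tec|tnc] := eqVneq t c; first by rewrite tec.
    have tgc' : c < t by rewrite lt_def tgc andbT; apply/eqP => e; move: tnc; rewrite e eqxx.
    have htc : `|t - c| < del by rewrite gtr0_norm ?subr_gt0 //; lra.
    have h2 := hdel t htc.
    rewrite (gtr0_norm (_ : 0 < t - c)) ?subr_gt0 // in h2.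
    have h3 : `|f' c * (t - c)| <= K * (t - c).
      rewrite normrM (gtr0_norm (_ : 0 < t - c)) ?subr_gt0 //.
      apply: ler_wpM2r; [rewrite subr_ge0; exact: ltW|exact: hK].
    move: h2 => /ler_normlP [h2a h2b]. move: h3 => /ler_normlP [h3a h3b].
    move: cB => /ler_normlP [h1a h1b].
    have eL : L * t = K * (t - c) + eta * (t - c) + L * c by rewrite /L; ring.
    rewrite Num.Theory.ler_norml eL; apply/andP; split; lra.
  have := ub_le_sup Sub Ss; rewrite -/c; lra.
rewrite c1' mulr1 in cB; exact: cB.
Qed.
End MVI.

Section Taylor.
Variable R : realType.

Lemma dAt_add (f g : R -> R) t a b : dAt f t a -> dAt g t b ->
  dAt (fun s => f s + g s) t (a + b).
Proof.
move=> hf hg e e0.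
have e2 : 0 < e / 2 by rewrite divr_gt0.
have [d1 [d10 h1]] := hf _ e2.
have [d2 [d20 h2]] := hg _ e2.
have [m [m0 [m1 m2]]] := small2 d10 d20.
exists m; split => // s hs.
have := h1 s (lt_le_trans hs m1); have := h2 s (lt_le_trans hs m2).
move=> /ler_normlP [h2a h2b] /ler_normlP [h1a h1b].
rewrite Num.Theory.ler_norml; apply/andP; split; lra.
Qed.

Lemma dAt_opp (f : R -> R) t a : dAt f t a -> dAt (fun s => - f s) t (- a).
Proof.
move=> hf e e0; have [d [d0 h]] := hf e e0; exists d; split => // s hs.
rewrite (_ : - f s - - f t - - a * (s - t) = - (f s - f t - a * (s - t))); last by ring.
by rewrite normrN; apply: h.
Qed.

Lemma dAt_poly (f : R -> R) t a c1 c2 : dAt f t a ->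
  dAt (fun s => f s - c1 * s - c2 * s ^+ 2) t (a - c1 - 2 * c2 * t).
Proof.
move=> hf e e0.
have e2 : 0 < e / 2 by rewrite divr_gt0.
have [d1 [d10 h1]] := hf _ e2.
have c0 : 0 < 2 * (`|c2| + 1) by rewrite mulr_gt0 // ltr_pwDr.
have [m [m0 [m1 m2]]] := small2 d10 (divr_gt0 e0 c0).
exists m; split => // s hs.
have := h1 s (lt_le_trans hs m1) => /ler_normlP [h1a h1b].
have hs2 : `|s - t| * (2 * (`|c2| + 1)) <= e.
  by rewrite -ler_pdivlMr //; apply: ltW; apply: lt_le_trans hs m2.
have hc : `|c2 * (s - t) ^+ 2| <= e / 2 * `|s - t|.
  rewrite normrM normrX.
  have n0 : 0 <= `|s - t| by [].
  have c20 : 0 <= `|c2| by [].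
  have := ler_wpM2l n0 hs2.
  nra.
move: hc => /ler_normlP [hca hcb].
rewrite Num.Theory.ler_norml; apply/andP; split.
  have -> : f s - c1 * s - c2 * s ^+ 2 - (f t - c1 * t - c2 * t ^+ 2) - (a - c1 - 2 * c2 * t) * (s - t)
    = (f s - f t - a * (s - t)) - c2 * (s - t) ^+ 2 by ring.
  lra.
have -> : f s - c1 * s - c2 * s ^+ 2 - (f t - c1 * t - c2 * t ^+ 2) - (a - c1 - 2 * c2 * t) * (s - t)
    = (f s - f t - a * (s - t)) - c2 * (s - t) ^+ 2 by ring.
lra.
Qed.

Variable n : nat.

Lemma dist_line (p h : vec R n) s t :
  dist (fun i => p i + s * h i) (fun i => p i + t * h i) = `|s - t| * nrm h.
Proof.
rewrite /dist -nrm_scale; apply: nrm_ext => i; rewrite /vsub; ring.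
Qed.

Lemma dAt_line (g : vec R n -> R) (G : vec R n) (p h y0 : vec R n) t :
  y0 = (fun i => p i + t * h i) ->
  (forall e, 0 < e -> exists d, 0 < d /\ forall z', dist z' y0 < d ->
     `|g z' - g y0 - \sum_(j < n) G j * (z' j - y0 j)| <= e * dist z' y0) ->
  dAt (fun s => g (fun i => p i + s * h i)) t (\sum_(j < n) G j * h j).
Proof.
move=> ey0 H e e0.
set C := nrm h + 1.
have C0 : 0 < C by rewrite /C ltr_pwDr // nrm_ge0.
have [d [d0 hd]] := H (e / C) (divr_gt0 e0 C0).
exists (d / C); split; first by rewrite divr_gt0.
move=> s hs.
have ed : dist (fun i => p i + s * h i) y0 = `|s - t| * nrm h by rewrite ey0 dist_line.
have hC : nrm h <= C by rewrite /C lerDl.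
have n0 : 0 <= nrm h := nrm_ge0 h.
have a0 : 0 <= `|s - t| by [].
have lt1 : `|s - t| * C < d by rewrite -ltr_pdivlMr.
have hlt : dist (fun i => p i + s * h i) y0 < d.
  rewrite ed; apply: le_lt_trans lt1; exact: ler_wpM2l.
have := hd _ hlt.
have -> : \sum_(j < n) G j * ((fun i => p i + s * h i) j - y0 j) = (\sum_(j < n) G j * h j) * (s - t).
  rewrite mulr_suml; apply: eq_bigr => j _; rewrite ey0 /=; ring.
rewrite ed => h1; rewrite ey0 in h1; apply: le_trans h1 _.
rewrite (_ : e / C * (`|s - t| * nrm h) = e * `|s - t| * (nrm h / C)); last by ring.
rewrite -[X in _ <= X]mulr1; apply: ler_wpM2l; first by rewrite mulr_ge0 // ltW.
by rewrite ler_pdivrMr // mul1r.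
Qed.


Lemma sum_const_le (F : 'I_n -> R) c : (forall i, F i <= c) -> \sum_(i < n) F i <= n%:R * c.
Proof.
move=> h; apply: le_trans (_ : \sum_(i < n) c <= _); first by apply: ler_sum => i _.
by rewrite sumr_const card_ord mulr_natl.
Qed.

Lemma taylor1 (g : vec R n -> R) (G : vec R n -> vec R n) (K : 'I_n -> 'I_n -> R)
  (x : vec R n) r e :
  0 < r -> 0 <= e ->
  (forall y, dist y x < r -> forall e', 0 < e' -> exists d, 0 < d /\ forall z', dist z' y < d ->
     `|g z' - g y - \sum_(j < n) G y j * (z' j - y j)| <= e' * dist z' y) ->
  (forall y, dist y x < r -> forall i,
     `|G y i - G x i - \sum_(j < n) K i j * (y j - x j)| <= e * dist y x) ->
  forall z, dist z x < r ->
  `|g z - g x - \sum_(i < n) G x i * (z i - x i)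
      - 2^-1 * \sum_(i < n) \sum_(j < n) K i j * (z i - x i) * (z j - x j)|
    <= n%:R * e * dist z x ^+ 2.
Proof.
move=> r0 e0 H1 H2 z hz.
set h := fun i => z i - x i.
set A := \sum_(i < n) G x i * h i.
set Q := \sum_(i < n) \sum_(j < n) K i j * h i * h j.
set y := fun s => (fun i => x i + s * h i).
have dy : forall s, 0 <= s <= 1 -> dist (y s) x <= dist z x.
  move=> s /andP[s0 s1].
  have -> : dist (y s) x = `|s| * nrm h.
    rewrite /dist -nrm_scale; apply: nrm_ext => i; rewrite /vsub /y; ring.
  rewrite ger0_norm //; rewrite -[X in _ <= X]mul1r; apply: ler_wpM2r => //.
  exact: nrm_ge0.
set phi := fun s => g (y s) - A * s - (2^-1 * Q) * s ^+ 2.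
set dphi := fun s => \sum_(j < n) G (y s) j * h j - A - 2 * (2^-1 * Q) * s.
have hphi : forall s, 0 <= s <= 1 -> dAt phi s (dphi s).
  move=> s hs; apply: dAt_poly.
  apply: (@dAt_line g (G (y s)) x h (y s) s) => //.
  exact: H1 (le_lt_trans (dy s hs) hz).
have two : (2:R) != 0 by rewrite pnatr_eq0.
have hb : forall s, 0 <= s <= 1 -> `|dphi s| <= n%:R * e * dist z x ^+ 2.
  move=> s hs.
  have -> : dphi s = \sum_(i < n) h i * (G (y s) i - G x i - \sum_(j < n) K i j * (y s j - x j)).
    rewrite (eq_bigr (fun i => G (y s) i * h i - G x i * h i - s * \sum_(j < n) K i j * h i * h j)); last first.
      move=> i _.
      have -> : \sum_(j < n) K i j * (y s j - x j) = s * \sum_(j < n) K i j * h j.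
        by rewrite mulr_sumr; apply: eq_bigr => j _; rewrite /y; ring.
      have -> : \sum_(j < n) K i j * h i * h j = h i * \sum_(j < n) K i j * h j.
        by rewrite mulr_sumr; apply: eq_bigr => j _; ring.
      ring.
    rewrite !sumrB -mulr_sumr /dphi -/A -/Q.
    by rewrite mulrA (mulfV two) mul1r mulrC.
  apply: le_trans (ler_norm_sum _ _ _) _.
  rewrite -mulrA; apply: sum_const_le => i.
  rewrite normrM expr2 mulrCA.
  apply: ler_pM => //; first exact: (dist_abs z x i).
  apply: le_trans (H2 _ (le_lt_trans (dy s hs) hz) i) _.
  apply: ler_wpM2l => //; exact: dy.
have := MVI hphi hb.
have ey1 : y 1 = z by apply: funext => i; rewrite /y /h; ring.
have ey0 : y 0 = x by apply: funext => i; rewrite /y; ring.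
rewrite /phi ey1 ey0.
have -> : g z - A * 1 - 2^-1 * Q * 1 ^+ 2 - (g x - A * 0 - 2^-1 * Q * 0 ^+ 2)
  = g z - g x - A - 2^-1 * Q by ring.
by [].
Qed.


Lemma sum_delta (F : 'I_n -> R) i : \sum_(a < n) F a * (a == i)%:R = F i.
Proof.
rewrite (bigD1 i) //= eqxx mulr1 big1 ?addr0 // => a /negbTE ->; by rewrite mulr0.
Qed.

Lemma nrm_ev i : nrm (fun l : 'I_n => (l == i)%:R : R) = 1.
Proof.
rewrite /nrm (bigD1 i) //= eqxx expr1n big1 ?addr0 ?sqrtr1 // => a /negbTE ->.
by rewrite expr0n.
Qed.

Lemma second_diff (g : vec R n -> R) (G : vec R n -> vec R n) (K : 'I_n -> 'I_n -> R)
  (x : vec R n) r e :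
  0 < r -> 0 <= e ->
  (forall y, dist y x < r -> forall e', 0 < e' -> exists d, 0 < d /\ forall z', dist z' y < d ->
     `|g z' - g y - \sum_(j < n) G y j * (z' j - y j)| <= e' * dist z' y) ->
  (forall y, dist y x < r -> forall i,
     `|G y i - G x i - \sum_(j < n) K i j * (y j - x j)| <= e * dist y x) ->
  forall h k : vec R n, nrm h + nrm k < r ->
  `|g (fun l => x l + k l + h l) - g (fun l => x l + h l) - g (fun l => x l + k l) + g x
     - \sum_(i < n) \sum_(j < n) K i j * h i * k j|
    <= n%:R * (nrm h * (e * (nrm k + nrm h + nrm h))).
Proof.
move=> r0 e0 H1 H2 h k hr.
set p1 := fun l => x l + k l.
set y1 := fun s => (fun i => p1 i + s * h i).
set y2 := fun s => (fun i => x i + s * h i).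
set B := \sum_(i < n) \sum_(j < n) K i j * h i * k j.
have nh0 := nrm_ge0 h; have nk0 := nrm_ge0 k.
have dy1 : forall s, 0 <= s <= 1 -> dist (y1 s) x <= nrm k + nrm h.
  move=> s /andP[s0 s1].
  have -> : dist (y1 s) x = nrm (fun i => k i + s * h i).
    by rewrite /dist; apply: nrm_ext => i; rewrite /vsub /y1 /p1; ring.
  apply: le_trans (nrm_add _ _) _; rewrite lerD2l nrm_scale ger0_norm //.
  by rewrite -[X in _ <= X]mul1r; apply: ler_wpM2r.
have dy2 : forall s, 0 <= s <= 1 -> dist (y2 s) x <= nrm h.
  move=> s /andP[s0 s1].
  have -> : dist (y2 s) x = nrm (fun i => s * h i).
    by rewrite /dist; apply: nrm_ext => i; rewrite /vsub /y2; ring.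
  rewrite nrm_scale ger0_norm //.
  by rewrite -[X in _ <= X]mul1r; apply: ler_wpM2r.
set phi := fun s => (g (y1 s) + - g (y2 s)) - B * s - 0 * s ^+ 2.
set dphi := fun s => (\sum_(j < n) G (y1 s) j * h j + - \sum_(j < n) G (y2 s) j * h j) - B - 2 * 0 * s.
have hphi : forall s, 0 <= s <= 1 -> dAt phi s (dphi s).
  move=> s hs; apply: dAt_poly; apply: dAt_add; last apply: dAt_opp.
    apply: (@dAt_line g (G (y1 s)) p1 h (y1 s) s) => //.
    apply: H1; apply: le_lt_trans (dy1 s hs) _; lra.
  apply: (@dAt_line g (G (y2 s)) x h (y2 s) s) => //.
  apply: H1; apply: le_lt_trans (dy2 s hs) _; lra.
have hb : forall s, 0 <= s <= 1 -> `|dphi s| <= n%:R * (nrm h * (e * (nrm k + nrm h + nrm h))).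
  move=> s hs.
  have -> : dphi s = \sum_(i < n) h i * ((G (y1 s) i - G x i - \sum_(j < n) K i j * (y1 s j - x j))
                                        - (G (y2 s) i - G x i - \sum_(j < n) K i j * (y2 s j - x j))).
    rewrite (eq_bigr (fun i => G (y1 s) i * h i - G (y2 s) i * h i - \sum_(j < n) K i j * h i * k j)); last first.
      move=> i _.
      have -> : \sum_(j < n) K i j * (y1 s j - x j) = \sum_(j < n) K i j * k j + s * \sum_(j < n) K i j * h j.
        by rewrite mulr_sumr -big_split; apply: eq_bigr => j _; rewrite /y1 /p1 /=; ring.
      have -> : \sum_(j < n) K i j * (y2 s j - x j) = s * \sum_(j < n) K i j * h j.
        by rewrite mulr_sumr; apply: eq_bigr => j _; rewrite /y2 /=; ring.
      have -> : \sum_(j < n) K i j * h i * k j = h i * \sum_(j < n) K i j * k j.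
        by rewrite mulr_sumr; apply: eq_bigr => j _; ring.
      ring.
    rewrite !sumrB -/B /dphi; ring.
  apply: le_trans (ler_norm_sum _ _ _) _.
  apply: sum_const_le => i.
  rewrite normrM; apply: ler_pM => //; first exact: abs_le_nrm.
  apply: le_trans (ler_normB _ _) _.
  have hr1 : nrm k + nrm h < r by lra.
  have hr2 : nrm h < r by lra.
  have a1 := le_trans (H2 _ (le_lt_trans (dy1 s hs) hr1) i) (ler_wpM2l e0 (dy1 s hs)).
  have a2 := le_trans (H2 _ (le_lt_trans (dy2 s hs) hr2) i) (ler_wpM2l e0 (dy2 s hs)).
  have -> : e * (nrm k + nrm h + nrm h) = e * (nrm k + nrm h) + e * nrm h by ring.
  exact: lerD.
have := MVI hphi hb.
have e11 : y1 1 = (fun l => x l + k l + h l) by apply: funext => i; rewrite /y1 /p1 /=; ring.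
have e21 : y2 1 = (fun l => x l + h l) by apply: funext => i; rewrite /y2 /=; ring.
have e10 : y1 0 = p1 by apply: funext => i; rewrite /y1 /p1 /=; ring.
have e20 : y2 0 = x by apply: funext => i; rewrite /y2 /=; ring.
rewrite /phi e11 e21 e10 e20.
set a := g (fun l => x l + k l + h l); set b := g (fun l => x l + h l).
have -> : a + - b - B * 1 - 0 * 1 ^+ 2 - (g p1 + - g x - B * 0 - 0 * 0 ^+ 2) = a - b - g p1 + g x - B by ring.
by [].
Qed.


Lemma hess_sym (g : vec R n -> R) (G : vec R n -> vec R n) (K : 'I_n -> 'I_n -> R)
  (x : vec R n) r :
  0 < r ->
  (forall y, dist y x < r -> forall e', 0 < e' -> exists d, 0 < d /\ forall z', dist z' y < d ->
     `|g z' - g y - \sum_(j < n) G y j * (z' j - y j)| <= e' * dist z' y) ->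
  (forall e, 0 < e -> exists d, 0 < d /\ forall y, dist y x < d -> forall i,
     `|G y i - G x i - \sum_(j < n) K i j * (y j - x j)| <= e * dist y x) ->
  forall i j, K i j = K j i.
Proof.
move=> r0 H1 H2 i j.
apply/eqP; rewrite -subr_eq0 -normr_le0; apply/ler_addgt0Pr => eps eps0; rewrite add0r.
pose C : R := 6 * n%:R + 1.
have C0 : 0 < C by rewrite /C ltr_pwDr // mulr_ge0.
pose e := eps / C.
have e0 : 0 < e by rewrite divr_gt0.
have [d [d0 hd]] := H2 e e0.
have [m [m0 [m1 m2]]] := small2 r0 d0.
pose s := m / 4.
have s0 : 0 < s by rewrite divr_gt0.
have H1' : forall y, dist y x < m -> forall e', 0 < e' -> exists d, 0 < d /\ forall z', dist z' y < d ->
     `|g z' - g y - \sum_(j < n) G y j * (z' j - y j)| <= e' * dist z' y.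
  by move=> y hy; apply: H1; apply: lt_le_trans hy m1.
have H2' : forall y, dist y x < m -> forall i,
     `|G y i - G x i - \sum_(j < n) K i j * (y j - x j)| <= e * dist y x.
  by move=> y hy; apply: hd; apply: lt_le_trans hy m2.
have nev : forall a : 'I_n, nrm (fun l => s * (l == a)%:R) = s.
  move=> a; have := nrm_scale (fun l : 'I_n => (l == a)%:R : R) s; move=> /= ->.
  by rewrite nrm_ev mulr1 gtr0_norm.
have hsm : nrm (fun l => s * (l == i)%:R) + nrm (fun l => s * (l == j)%:R) < m.
  rewrite !nev /s; lra.
have hsm' : nrm (fun l => s * (l == j)%:R) + nrm (fun l => s * (l == i)%:R) < m.
  rewrite !nev /s; lra.
have eB : forall a b : 'I_n, \sum_(i0 < n) \sum_(j0 < n) K i0 j0 * (s * (i0 == a)%:R) * (s * (j0 == b)%:R)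
   = s ^+ 2 * K a b.
  move=> a b.
  transitivity (\sum_(i0 < n) (s ^+ 2 * K i0 b) * (i0 == a)%:R); last by rewrite sum_delta.
  apply: eq_bigr => i0 _.
  rewrite -(sum_delta (fun j0 => s ^+ 2 * K i0 j0 * (i0 == a)%:R) b).
  by apply: eq_bigr => j0 _; ring.
have D1 := second_diff m0 (ltW e0) H1' H2' hsm.
have D2 := second_diff m0 (ltW e0) H1' H2' hsm'.
rewrite !nev eB in D1; rewrite !nev eB in D2.
have ept : (fun l => x l + s * (l == i)%:R + s * (l == j)%:R) = (fun l => x l + s * (l == j)%:R + s * (l == i)%:R).
  by apply: funext => l; ring.
rewrite ept in D2.
set a1 := g (fun l => x l + s * (l == j)%:R + s * (l == i)%:R) in D1 D2.
set b1 := g (fun l => x l + s * (l == i)%:R) in D1 D2.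
set c1 := g (fun l => x l + s * (l == j)%:R) in D1 D2.
move: D1 => /ler_normlP [D1a D1b]; move: D2 => /ler_normlP [D2a D2b].
have s20 : 0 < s ^+ 2 by rewrite exprn_gt0.
have hk : `|(K i j - K j i) * s ^+ 2| <= (6 * n%:R * e) * s ^+ 2.
  rewrite Num.Theory.ler_norml; apply/andP; split; nra.
rewrite normrM (gtr0_norm s20) ler_pM2r // in hk.
apply: le_trans hk _.
rewrite /e mulrA ler_pdivrMr // /C; nra.
Qed.

End Taylor.

Section Apply.
Variable R : realType.
Variables N n : nat.

Lemma td_H1 (u : vec R n -> vec R N) (x : vec R n) (Du : vec R n -> mat R N n) d : 
  (forall z, dist z x < d -> is_deriv u z (Du z)) -> forall a,
  forall y, dist y x < d -> forall e', 0 < e' -> exists del, 0 < del /\ forall z', dist z' y < del ->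
     `|u z' a - u y a - \sum_(j < n) Du y (a, j) * (z' j - y j)| <= e' * dist z' y.
Proof.
move=> hd a y hy e' e0; have [del [del0 h]] := hd y hy e' e0.
exists del; split => // z' hz; apply: le_trans (h z' hz).
exact: (abs_le_nrm (fun t => u z' t - u y t - \sum_(j < n) Du y (t, j) * (z' j - y j)) a).
Qed.

Lemma td_H2 (Du : vec R n -> mat R N n) x (D2 : arr R N n) :
  is_deriv Du x D2 -> forall a,
  forall e, 0 < e -> exists d, 0 < d /\ forall y, dist y x < d -> forall i,
     `|Du y (a, i) - Du x (a, i) - \sum_(j < n) D2 (a, i, j) * (y j - x j)| <= e * dist y x.
Proof.
move=> hd a e e0; have [d [d0 h]] := hd e e0.
exists d; split => // y hy i; apply: le_trans (h y hy).
exact: (abs_le_nrm (fun t => Du y t - Du x t - \sum_(j < n) D2 (t, j) * (y j - x j)) (a, i)).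
Qed.

Lemma twice_sym (u : vec R n -> vec R N) (x : vec R n) (Du : vec R n -> mat R N n) (D2 : arr R N n) :
  twice_diff_at u x Du D2 -> symarr D2.
Proof.
move=> [[d [d0 hd]] hD] a i j.
exact: (@hess_sym R n (fun z => u z a) (fun z i => Du z (a, i)) (fun i j => D2 (a, i, j)) x d d0
   (td_H1 hd a) (td_H2 hD a) i j).
Qed.

Lemma twice_taylor (u : vec R n -> vec R N) (x : vec R n) (Du : vec R n -> mat R N n) (D2 : arr R N n) :
  twice_diff_at u x Du D2 -> forall eps, 0 < eps -> exists del, 0 < del /\ forall z, dist z x < del ->
  nrm (fun a => u z a - u x a - mv (Du x) (vsub z x) a - 2^-1 * quad D2 (vsub z x) a)
    <= eps * dist z x ^+ 2.
Proof.
move=> [[d [d0 hd]] hD] eps eps0.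
pose C : R := N%:R * n%:R + 1.
have C0 : 0 < C by rewrite /C ltr_pwDr // mulr_ge0.
pose e := eps / C.
have e0 : 0 < e by rewrite divr_gt0.
have [d1 [d10 h1]] := hD e e0.
have [r [r0 [r1 r2]]] := small2 d0 d10.
exists r; split => // z hz.
have comp : forall a, `|u z a - u x a - mv (Du x) (vsub z x) a - 2^-1 * quad D2 (vsub z x) a|
    <= n%:R * e * dist z x ^+ 2.
  move=> a.
  have H1' : forall y, dist y x < r -> forall e', 0 < e' -> exists del, 0 < del /\ forall z', dist z' y < del ->
     `|u z' a - u y a - \sum_(j < n) Du y (a, j) * (z' j - y j)| <= e' * dist z' y.
    by move=> y hy; apply: (td_H1 hd a); apply: lt_le_trans hy r1.
  have H2' : forall y, dist y x < r -> forall i,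
     `|Du y (a, i) - Du x (a, i) - \sum_(j < n) D2 (a, i, j) * (y j - x j)| <= e * dist y x.
    move=> y hy i; apply: le_trans (h1 y (lt_le_trans hy r2)).
    exact: (abs_le_nrm (fun t => Du y t - Du x t - \sum_(j < n) D2 (t, j) * (y j - x j)) (a, i)).
  exact: (@taylor1 R n (fun z => u z a) (fun z i => Du z (a, i)) (fun i j => D2 (a, i, j)) x r e
     r0 (ltW e0) H1' H2' z hz).
apply: le_trans (nrm_le_const comp) _.
rewrite card_ord.
have dz0 : 0 <= dist z x ^+ 2 by rewrite sqr_ge0.
rewrite (_ : N%:R * (n%:R * e * dist z x ^+ 2) = (N%:R * (n%:R * e)) * dist z x ^+ 2); last by ring.
apply: ler_wpM2r => //.
have -> : N%:R * (n%:R * e) = eps * (N%:R * n%:R / C) by rewrite /e; ring.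
rewrite -[X in _ <= X]mulr1 ler_wpM2l ?(ltW eps0) // ler_pdivrMr // mul1r /C lerDl //.
Qed.

End Apply.

Section Majorant.
Variable R : realType.

Definition clamp (q : R) : R := if q <= 1 then 1 else if q <= 2 then 2 - q else 0.

Lemma clamp_ge0 q : 0 <= clamp q.
Proof. rewrite /clamp; case: ifP => h1; first by []. case: ifP => h2 //; lra. Qed.

Lemma clamp_le1 q : clamp q <= 1.
Proof.
rewrite /clamp; case: ifP => h1; first by [].
move/negbT: h1; rewrite -ltNge => h1.
case: ifP => h2; lra.
Qed.

Lemma clamp1 : clamp 1 = 1.
Proof. by rewrite /clamp lexx. Qed.

Lemma clamp_big q : 2 <= q -> clamp q = 0.
Proof.
move=> hq; rewrite /clamp; case: ifP => h1; first lra.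
case: ifP => h2 //; have -> : q = 2 by apply/le_anti; rewrite h2 hq.
by rewrite subrr.
Qed.

Lemma clamp_lip a b : `|clamp a - clamp b| <= `|a - b|.
Proof.
have n1 : a - b <= `|a - b| := ler_norm _.
have n2 : b - a <= `|a - b| by rewrite distrC ler_norm.
rewrite /clamp.
case: (lerP a 1) => ha; case: (lerP b 1) => hb;
  try (case: (lerP b 2) => hb2); try (case: (lerP a 2) => ha2);
  rewrite Num.Theory.ler_norml; apply/andP; split; lra.
Qed.

Variable n : nat.

Lemma majorant (W : vec R n -> R) (x : vec R n) :
 (forall z, 0 <= W z) ->
 (forall eps, 0 < eps -> exists del, 0 < del /\ forall z, dist z x < del -> W z <= eps * dist z x ^+ 2) ->
 exists (H : R -> R) (d1 : R), 0 < d1 /\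
   (forall r, 0 <= H r) /\
   (forall z, 0 < dist z x -> dist z x < d1 -> W z <= H (dist z x) * dist z x ^+ 2) /\
   (forall eps, 0 < eps -> exists del, 0 < del /\ forall r, 0 < r -> r < del -> H r <= eps) /\
   (forall r, 0 < r -> forall eps, 0 < eps -> exists del, 0 < del /\
      forall r', 0 < r' -> `|r' - r| < del -> `|H r' - H r| < eps).
Proof.
move=> W0 hW.
have [d1 [d10 hd1]] := hW 1 ltr01.
pose S r := [set v : R | v = 0 \/ exists z, (0 < dist z x /\ dist z x < d1) /\
   v = W z / dist z x ^+ 2 * clamp (dist z x / r)].
pose H r := sup (S r).
have q1 : forall z, 0 < dist z x -> dist z x < d1 -> W z / dist z x ^+ 2 <= 1.
  move=> z h0 h1; rewrite ler_pdivrMr ?exprn_gt0 // mul1r; have := hd1 z h1; by rewrite mul1r.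
have q0 : forall z, 0 <= W z / dist z x ^+ 2 by move=> z; rewrite divr_ge0 ?sqr_ge0.
have Sub : forall r v, S r v -> v <= 1.
  move=> r v [->|[z [[h0 h1] ->]]]; first by rewrite ler01.
  apply: le_trans (_ : 1 * 1 <= 1); last by rewrite mul1r.
  apply: ler_pM => //; [exact: clamp_ge0 | exact: q1 | exact: clamp_le1].
have Shas : forall r, has_sup (S r).
  move=> r; split; first by exists 0; left.
  by exists 1 => v; apply: Sub.
have Hge : forall r v, S r v -> v <= H r by move=> r v Sv; apply: ub_le_sup (Shas r).2 _ Sv.
have Hle : forall r c, (forall v, S r v -> v <= c) -> H r <= c.
  by move=> r c hc; apply: ge_sup; [exists 0; left | exact: hc].
exists H, d1; split => //; split.
  by move=> r; apply: Hge; left.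
split.
  move=> z h0 h1.
  have := Hge (dist z x) _ (or_intror (ex_intro _ z (conj (conj h0 h1) erefl))).
  by rewrite divff ?gt_eqF // clamp1 mulr1 ler_pdivrMr ?exprn_gt0.
split.
  move=> eps eps0.
  have [del [del0 hdel]] := hW eps eps0.
  exists (del / 2); split; first by rewrite divr_gt0.
  move=> r r0 rd; apply: Hle => v [->|[z [[h0 h1] ->]]]; first exact: ltW.
  have [hz|hz] := lerP (2 * r) (dist z x).
    rewrite clamp_big ?mulr0; [exact: ltW | by rewrite ler_pdivlMr // mulrC].
  have hz' : dist z x < del by lra.
  apply: le_trans (_ : eps * 1 <= eps); last by rewrite mulr1.
  apply: ler_pM => //; [exact: clamp_ge0 | | exact: clamp_le1].
  by rewrite ler_pdivrMr ?exprn_gt0 //; apply: hdel.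
have Hlip : forall r r', 0 < r -> 0 < r' -> H r' <= H r + d1 * `|r' - r| / (r * r').
  move=> r r' r0 r'0; apply: Hle => v [->|[z [[h0 h1] ->]]].
    apply: le_trans (Hge r 0 (or_introl erefl)) _; rewrite lerDl divr_ge0 ?mulr_ge0 //; exact: ltW.
  set q := W z / dist z x ^+ 2.
  have Sv := Hge r _ (or_intror (ex_intro _ z (conj (conj h0 h1) erefl))).
  rewrite -/q in Sv.
  have hq0 := q0 z; have hq1 := q1 z h0 h1; rewrite -/q in hq0 hq1.
  have hc : `|clamp (dist z x / r') - clamp (dist z x / r)| <= d1 * `|r' - r| / (r * r').
    apply: le_trans (clamp_lip _ _) _.
    have -> : dist z x / r' - dist z x / r = dist z x * (r - r') / (r * r').
      by field; rewrite ?gt_eqF.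
    rewrite normrM normfV !normrM (gtr0_norm h0) (gtr0_norm r0) (gtr0_norm r'0) distrC.
    rewrite ler_pM2r ?invr_gt0 ?mulr_gt0 //; apply: ler_wpM2r => //; exact: ltW.
  move: hc => /ler_normlP [hca hcb].
  have : q * clamp (dist z x / r') <= q * clamp (dist z x / r) + q * (d1 * `|r' - r| / (r * r')).
    rewrite -mulrDr; apply: ler_wpM2l => //; lra.
  move=> h; apply: le_trans h _; apply: lerD => //.
  rewrite -[X in _ <= X]mul1r; apply: ler_wpM2r => //.
  by rewrite divr_ge0 ?mulr_ge0 // ltW.
move=> r r0 eps eps0.
have c0 : 0 < eps * r ^+ 2 / (2 * (d1 + 1)).
  by rewrite divr_gt0 ?mulr_gt0 ?exprn_gt0 // addr_gt0.
have [del [del0 [del1 del2]]] := small2 (divr_gt0 r0 (ltr0n _ 2)) c0.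
exists del; split => // r' r'0 hr.
have hr' : r / 2 < r'.
  move: hr => /ltr_normlP [h1 h2]; lra.
have key : d1 * `|r' - r| / (r * r') < eps.
  rewrite ltr_pdivrMr ?mulr_gt0 //.
  have h1 : `|r' - r| * (2 * (d1 + 1)) < eps * r ^+ 2.
    by rewrite -ltr_pdivlMr ?mulr_gt0 ?addr_gt0 //; apply: lt_le_trans hr del2.
  have h2 : r * (r / 2) < r * r' by rewrite ltr_pM2l.
  have h3 : eps * (r * (r / 2)) < eps * (r * r') by rewrite ltr_pM2l.
  have a0 : 0 <= `|r' - r| by [].
  have h4 : d1 * `|r' - r| <= (d1 + 1) * `|r' - r| by apply: ler_wpM2r => //; lra.
  rewrite expr2 in h1. nra.
have l1 := Hlip r r' r0 r'0.
have l2 := Hlip r' r r'0 r0.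
rewrite distrC [r' * r]mulrC in l2.
rewrite Num.Theory.ltr_norml; apply/andP; split; lra.
Qed.

End Majorant.

Section Jet.
Variable R : realType.
Variables N n : nat.

Lemma sum_prod (f g : 'I_N -> R) :
  \sum_(a < N) \sum_(b < N) f a * g b = (\sum_(a < N) f a) * (\sum_(b < N) g b).
Proof. by rewrite mulr_suml; apply: eq_bigr => a _; rewrite mulr_sumr. Qed.

Lemma qform_vee (xi w v : vec R N) :
  qform (vee xi w) v = (\sum_(a < N) xi a * v a) * (\sum_(b < N) w b * v b).
Proof.
transitivity (2^-1 * (\sum_(a < N) \sum_(b < N) (xi a * v a) * (w b * v b)
                     + \sum_(a < N) \sum_(b < N) (w a * v a) * (xi b * v b))).
  rewrite -big_split mulr_sumr; apply: eq_bigr => a _.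
  rewrite -big_split mulr_sumr; apply: eq_bigr => b _ /=; rewrite /vee /=; ring.
rewrite !sum_prod; field; done.
Qed.

Lemma qform_diag (c h : R) (v : vec R N) :
  qform (mxscale c (fun p : 'I_N * 'I_N => h * (p.1 == p.2)%:R)) v = c * h * \sum_(a < N) v a ^+ 2.
Proof.
rewrite /qform mulr_sumr; apply: eq_bigr => a _.
transitivity (\sum_(b < N) (c * h * v a * v b) * (b == a)%:R); last by rewrite sum_delta; ring.
apply: eq_bigr => b _; rewrite /mxscale /= eq_sym; ring.
Qed.

Lemma qform_bound (A : ('I_N * 'I_N)%type -> R) (v : vec R N) :
  `|qform A v| <= N%:R * (N%:R * (nrm A * (nrm v * nrm v))).
Proof.
apply: le_trans (ler_norm_sum _ _ _) _; apply: sum_const_le => a.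
apply: le_trans (ler_norm_sum _ _ _) _; apply: sum_const_le => b.
rewrite !normrM mulrA; apply: ler_pM => //.
  apply: ler_pM => //; [exact: (abs_le_nrm A (a, b)) | exact: abs_le_nrm].
exact: abs_le_nrm.
Qed.

Lemma nrm_pos (T : finType) (y : T -> R) : y <> @zerov R T -> 0 < nrm y.
Proof.
move=> hy; rewrite lt_def nrm_ge0 andbT; apply/eqP => h0; apply: hy.
by apply: funext => i; rewrite (nrm_eq0 h0).
Qed.

Lemma nrm_lip (T : finType) (y y' : T -> R) : `|nrm y' - nrm y| <= dist y' y.
Proof.
have h1 := nrm_sub_le y' y; have h2 := nrm_sub_le y y'; rewrite dist_sym in h2.
rewrite Num.Theory.ler_norml; apply/andP; split; lra.
Qed.

Lemma jet_from_taylor (Om : vec R n -> Prop) (u : vec R n -> vec R N) (xi : vec R N)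
   (x : vec R n) (P : mat R N n) (X : arr R N n) :
  symarr X -> nrm xi = 1 ->
  (forall eps, 0 < eps -> exists del, 0 < del /\ forall z, dist z x < del ->
     nrm (fun a => u z a - u x a - mv P (vsub z x) a - 2^-1 * quad X (vsub z x) a)
       <= eps * dist z x ^+ 2) ->
  jet2 Om u xi x P X.
Proof.
move=> sX nxi hT.
pose W z := nrm (fun a => u z a - u x a - mv P (vsub z x) a - 2^-1 * quad X (vsub z x) a).
have [H [d1 [d10 [H0 [Hmaj [Hsmall Hcont]]]]]] :=
  @majorant R n W x (fun z => nrm_ge0 _) hT.
have NN0 : 0 < (N%:R * N%:R : R) + 1 by rewrite ltr_pwDr // mulr_ge0.
have cardNN : (#|{: 'I_N * 'I_N}|%:R : R) = N%:R * N%:R.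
  by rewrite card_prod card_ord natrM.
split => //.
exists (fun y (p : 'I_N * 'I_N) => H (nrm y) * (p.1 == p.2)%:R).
split; first by move=> y _ a b /=; rewrite eq_sym.
split.
  move=> y hy e e0.
  have r0 := nrm_pos hy.
  have [del [del0 hdel]] := Hcont _ r0 (e / (N%:R * N%:R + 1)) (divr_gt0 e0 NN0).
  exists del; split => // y' hy' dy.
  have r'0 := nrm_pos hy'.
  have hH := hdel _ r'0 (le_lt_trans (nrm_lip y y') dy).
  rewrite /dist.
  have -> : vsub (fun p : 'I_N * 'I_N => H (nrm y') * (p.1 == p.2)%:R)
                 (fun p : 'I_N * 'I_N => H (nrm y) * (p.1 == p.2)%:R)
          = (fun p => (H (nrm y') - H (nrm y)) * (p.1 == p.2)%:R).
    by apply: funext => p; rewrite /vsub; ring.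
  apply: le_lt_trans (nrm_le_const (c := `|H (nrm y') - H (nrm y)|) _) _.
    move=> p; rewrite normrM; rewrite -[X in _ <= X]mulr1; apply: ler_wpM2l => //.
    by case: (p.1 == p.2); rewrite ?normr1 ?normr0.
  rewrite cardNN.
  apply: le_lt_trans (_ : (N%:R * N%:R) * (e / (N%:R * N%:R + 1)) < e).
    by apply: ler_wpM2l; [rewrite mulr_ge0 | exact: ltW].
  by rewrite mulrA ltr_pdivrMr // mulrDr mulr1 [e * _]mulrC ltrDl.
split.
  move=> e e0.
  have [del [del0 hdel]] := Hsmall (e / (N%:R * N%:R + 1)) (divr_gt0 e0 NN0).
  exists del; split => // y hy ny.
  have r0 := nrm_pos hy.
  have hH := hdel _ r0 ny.
  apply: le_lt_trans (nrm_le_const (c := H (nrm y)) _) _.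
    move=> p; rewrite normrM (ger0_norm (H0 _)); rewrite -[X in _ <= X]mulr1; apply: ler_wpM2l => //.
    by case: (p.1 == p.2); rewrite ?normr1 ?normr0.
  rewrite cardNN.
  apply: le_lt_trans (_ : (N%:R * N%:R) * (e / (N%:R * N%:R + 1)) < e).
    by apply: ler_wpM2l; [rewrite mulr_ge0 | exact: hH].
  by rewrite mulrA ltr_pdivrMr // mulrDr mulr1 [e * _]mulrC ltrDl.
exists d1; split => // z Omz zx dz v.
have dpos : 0 < dist z x.
  apply: nrm_pos => h0; apply: zx; apply: funext => i.
  by have := congr1 (fun f => f i) h0; rewrite /vsub /zerov /= => /eqP; rewrite subr_eq0 => /eqP.
rewrite qform_vee qform_diag.
have hW := Hmaj z dpos dz.
rewrite -/(dist z x).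
set w := (fun a => u z a - u x a - mv P (vsub z x) a - 2^-1 * quad X (vsub z x) a).
have hxv := dot_le xi v; have hwv := dot_le w v.
rewrite nxi mul1r in hxv.
have nv0 := nrm_ge0 v; have nw0 := nrm_ge0 w.
rewrite -(nrm_sq v).
apply: le_trans (ler_norm _) _; rewrite normrM.
apply: le_trans (ler_pM _ _ hxv hwv) _ => //.
rewrite -/(W z) in hW |- *.
have -> : nrm v * (W z * nrm v) = W z * nrm v ^+ 2 by ring.
have -> : dist z x ^+ 2 * H (dist z x) * nrm v ^+ 2 = (H (dist z x) * dist z x ^+ 2) * nrm v ^+ 2 by ring.
by apply: ler_wpM2r => //; rewrite sqr_ge0.
Qed.

End Jet.

Section PartA.
Variable R : realType.
Variables N n : nat.

Lemma seqcv_const (T : finType) (f : T -> R) : seqcv (fun _ : nat => f) f.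
Proof. by move=> e e0; exists 0%N => m _; rewrite dist_self. Qed.

Lemma dot_sub_le (xi f g : vec R N) : nrm xi = 1 ->
  dot xi f <= dot xi g + dist f g.
Proof.
move=> hxi.
have h := dot_le xi (vsub f g); rewrite hxi mul1r in h.
have e : dot xi f = dot xi g + \sum_(i < N) xi i * vsub f g i.
  by rewrite /dot -big_split /=; apply: eq_bigr => i _; rewrite /vsub; ring.
rewrite e lerD2l; exact: le_trans (ler_norm _) h.
Qed.

Lemma part_a (Om : vec R n -> Prop) (F : vec R n -> vec R N -> mat R N n -> arr R N n -> vec R N)
  (u : vec R n -> vec R N) :
  contact_sol Om F u -> F_continuous Om F ->
  forall (x : vec R n) (Du : vec R n -> mat R N n) (D2 : arr R N n),
    Om x -> twice_diff_at u x Du D2 -> forall a, F x (u x) (Du x) D2 a = 0.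
Proof.
move=> hcs hFc x Du D2 Omx htd.
have sD2 := twice_sym htd.
have Tay := twice_taylor htd.
have pos : forall xi : vec R N, nrm xi = 1 -> 0 <= dot xi (F x (u x) (Du x) D2).
  move=> xi hxi.
  have hj := @jet_from_taylor R N n Om u xi x (Du x) D2 sD2 hxi Tay.
  have jb : jet2bar Om u xi x (Du x) D2.
    exists (fun _ => xi), (fun _ => x), (fun _ => Du x), (fun _ => D2).
    split; first by move=> m; split.
    by split; [|split; [|split]]; apply: seqcv_const.
  have hc := hcs x xi (Du x) D2 Omx hxi jb.
  apply/ler_addgt0Pr => eps eps0.
  have [d [d0 hd]] := hFc x (u x) (Du x) D2 Omx sD2 eps eps0.
  have : (env Om F xi x (u x) (Du x) D2 <= (dot xi (F x (u x) (Du x) D2) + eps)%:E)%E.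
    pose Sd := fun e : R => [set r | exists y th Q Y, Om y /\ symarr Y /\
                 dist x y + dist (u x) th + dist (Du x) Q + dist D2 Y <= e /\
                 r = (dot xi (F y th Q Y))%:E].
    have hin : [set ereal_sup (Sd e) | e in [set e : R | 0 < e]] (ereal_sup (Sd (d / 2))).
      by exists (d / 2) => //; rewrite /= divr_gt0.
    have h1 := ereal_inf_lbound hin.
    rewrite /env; apply: le_trans h1 _.
    apply: ge_ereal_sup => r [y [th [Q [Y [Omy [sY [hdist ->]]]]]]].
    rewrite lee_fin.
    have hlt : dist x y + dist (u x) th + dist (Du x) Q + dist D2 Y < d.
      apply: le_lt_trans hdist _; rewrite ltr_pdivrMr // ltr_pMr //; lra.
    have := hd y th Q Y Omy sY hlt => hF.
    have := dot_sub_le (F y th Q Y) (F x (u x) (Du x) D2) hxi; lra.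
  move=> h; have := le_trans hc h; by rewrite lee_fin.
move=> a.
have e1 := pos (fun l => (l == a)%:R) (@nrm_ev R N a).
have e2 : nrm (fun l : 'I_N => - (l == a)%:R : R) = 1 by rewrite nrm_opp (@nrm_ev R N a).
have := pos _ e2.
have ed : forall (f : vec R N), dot (fun l => (l == a)%:R) f = f a.
  by move=> f; rewrite /dot -(sum_delta f a); apply: eq_bigr => i _; rewrite mulrC.
have edN : forall (f : vec R N), dot (fun l => - (l == a)%:R) f = - f a.
  move=> f; rewrite /dot -(sum_delta f a) -sumrN; apply: eq_bigr => i _; ring.
rewrite ed in e1; rewrite edN => e3.
lra.
Qed.

End PartA.

Section PartB1.
Variable R : realType.
Variables N n : nat.

Definition gam (xi v : vec R N) : R := nrm v + dot xi v.

Lemma sumsq_nrm (xi : vec R N) : nrm xi = 1 -> \sum_(a < N) xi a ^+ 2 = 1.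
Proof. by move=> h; rewrite -nrm_sq h expr1n. Qed.

Lemma gam_bound (xi w : vec R N) K : nrm xi = 1 -> 0 <= K ->
  (forall v, qform (vee xi w) v <= K * (nrm v * nrm v)) -> gam xi w <= 2 * K.
Proof.
move=> hxi K0 hq.
set nw := nrm w.
pose v := fun a => nw * xi a + w a.
have s1 : \sum_(a < N) xi a * v a = gam xi w.
  rewrite (eq_bigr (fun a => nw * xi a ^+ 2 + xi a * w a)); last by move=> a _; rewrite /v; ring.
  by rewrite big_split /= -mulr_sumr (sumsq_nrm hxi) mulr1.
have s2 : \sum_(a < N) w a * v a = nw * gam xi w.
  rewrite (eq_bigr (fun a => nw * (xi a * w a) + w a ^+ 2)); last by move=> a _; rewrite /v; ring.
  by rewrite big_split /= -mulr_sumr -nrm_sq /gam /dot -/nw; ring.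
have s3 : nrm v * nrm v = 2 * (nw * gam xi w).
  rewrite -expr2 nrm_sq.
  rewrite (eq_bigr (fun a => nw ^+ 2 * xi a ^+ 2 + 2 * nw * (xi a * w a) + w a ^+ 2)); last by move=> a _; rewrite /v; ring.
  by rewrite !big_split /= -!mulr_sumr (sumsq_nrm hxi) -nrm_sq /gam /dot -/nw; ring.
have := hq v; rewrite qform_vee s1 s2 s3 => h.
have [g0|g0] := lerP (gam xi w) 0; first lra.
have nw0 : 0 <= nw := nrm_ge0 w.
have nwp : 0 < nw.
  rewrite lt_def nw0 andbT; apply/eqP => nz.
  have wz := nrm_eq0 nz.
  move: g0; rewrite /gam -/nw nz add0r /dot big1 ?ltxx // => a _; by rewrite wz mulr0.
have p0 : 0 < nw * gam xi w by rewrite mulr_gt0.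
have : gam xi w * (nw * gam xi w) <= (2 * K) * (nw * gam xi w) by lra.
by rewrite ler_pM2r.
Qed.

Lemma gam_lip (xi f g : vec R N) : nrm xi = 1 -> gam xi f <= gam xi g + 2 * dist f g.
Proof.
move=> hxi; have h1 := nrm_sub_le f g; have h2 := dot_sub_le f g hxi.
rewrite /gam; lra.
Qed.

Lemma gam_scale (xi v : vec R N) t : 0 <= t -> gam xi (fun a => t * v a) = t * gam xi v.
Proof.
move=> t0; rewrite /gam nrm_scale ger0_norm // /dot mulrDr mulr_sumr; congr (_ + _).
by apply: eq_bigr => a _; ring.
Qed.

Lemma gam_nonpos (xi v : vec R N) : nrm xi = 1 -> gam xi v <= 0 ->
  forall a, v a = - nrm v * xi a.
Proof.
move=> hxi hg a.
set nv := nrm v.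
have h : nrm (fun a => v a + nv * xi a) ^+ 2 = 2 * (nv * gam xi v).
  rewrite nrm_sq.
  rewrite (eq_bigr (fun a => v a ^+ 2 + 2 * nv * (xi a * v a) + nv ^+ 2 * xi a ^+ 2)); last by move=> b _; ring.
  by rewrite !big_split /= -!mulr_sumr (sumsq_nrm hxi) -nrm_sq /gam /dot -/nv; ring.
have nv0 : 0 <= nv := nrm_ge0 v.
have : nrm (fun a => v a + nv * xi a) ^+ 2 <= 0 by rewrite h; nra.
move=> hle.
have hz : nrm (fun a => v a + nv * xi a) = 0.
  apply/eqP; rewrite -sqrf_eq0; apply/eqP/le_anti; rewrite hle sqr_ge0 //.
have := nrm_eq0 hz a => /= e; lra.
Qed.

Lemma small_t (a M t0 : R) : 0 < t0 -> (forall t, 0 < t -> t < t0 -> a <= t * M) -> a <= 0.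
Proof.
move=> t00 h; apply/ler_addgt0Pr => eta eta0; rewrite add0r.
have C0 : 0 < `|M| + 1 by rewrite ltr_pwDr.
have [t [tp [t1 t2]]] := small2 (divr_gt0 t00 (ltr0n _ 2)) (divr_gt0 eta0 C0).
have tt0 : t < t0 by lra.
apply: le_trans (h t tp tt0) _.
have h1 : t * M <= t * (`|M| + 1).
  apply: ler_wpM2l; [exact: ltW | apply: le_trans (ler_norm _) _; lra].
apply: le_trans h1 _; by rewrite -ler_pdivlMr.
Qed.

Lemma ptq (xi p q : vec R N) C : nrm xi = 1 -> 0 <= C ->
  (forall eps, 0 < eps -> exists del, 0 < del /\ forall t, 0 < t -> t < del ->
     gam xi (fun a => t * p a + t ^+ 2 * q a) <= eps * t ^+ 2 * C) ->
  gam xi p <= 0 /\ ((forall a, p a = 0) -> gam xi q <= 0).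
Proof.
move=> hxi C0 H; split.
  have [del [del0 hd]] := H 1 ltr01.
  apply: (@small_t _ (C + 2 * nrm q) del del0) => t t0 tdel.
  have := hd t t0 tdel.
  have -> : (fun a => t * p a + t ^+ 2 * q a) = (fun a => t * (p a + t * q a)).
    by apply: funext => a; ring.
  rewrite gam_scale ?(ltW t0) // mul1r expr2 -mulrA ler_pM2l // => h1.
  have h2 := gam_lip p (fun a => p a + t * q a) hxi.
  have ed : dist p (fun a => p a + t * q a) = t * nrm q.
    rewrite /dist; have -> : vsub p (fun a => p a + t * q a) = (fun a => t * (- q a)).
      by apply: funext => a; rewrite /vsub; ring.
    have := nrm_scale (fun a => - q a) t; move=> /= ->.
    by rewrite nrm_opp gtr0_norm.
  rewrite ed in h2; lra.
move=> p0; apply/ler_addgt0Pr => eta eta0; rewrite add0r.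
have C1 : 0 < C + 1 by lra.
have [del [del0 hd]] := H (eta / (C + 1)) (divr_gt0 eta0 C1).
have t0 : 0 < del / 2 by rewrite divr_gt0.
have tl : del / 2 < del by rewrite ltr_pdivrMr // ltr_pMr // ltr1n.
have := hd (del / 2) t0 tl.
have -> : (fun a => del / 2 * p a + (del / 2) ^+ 2 * q a) = (fun a => (del / 2) ^+ 2 * q a).
  by apply: funext => a; rewrite p0 mulr0 add0r.
rewrite gam_scale ?sqr_ge0 // => h.
have h' : gam xi q <= eta / (C + 1) * C.
  move: h; rewrite (_ : eta / (C + 1) * (del / 2) ^+ 2 * C = (del / 2) ^+ 2 * (eta / (C + 1) * C)); last by ring.
  by rewrite ler_pM2l ?exprn_gt0.
apply: le_trans h' _.
rewrite (_ : eta / (C + 1) * C = eta * (C / (C + 1))); last by ring.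
rewrite -[X in _ <= X]mulr1; apply: ler_wpM2l; [exact: ltW | by rewrite ler_pdivrMr // mul1r lerDl].
Qed.

Lemma mv_sub (P1 P2 : mat R N n) (h : vec R n) a :
  mv (fun p => P1 p - P2 p) h a = mv P1 h a - mv P2 h a.
Proof. by rewrite /mv -sumrB; apply: eq_bigr => i _; ring. Qed.

Lemma quad_sub (X1 X2 : arr R N n) (h : vec R n) a :
  quad (fun p => X1 p - X2 p) h a = quad X1 h a - quad X2 h a.
Proof.
rewrite /quad -sumrB; apply: eq_bigr => i _; rewrite -sumrB; apply: eq_bigr => j _; ring.
Qed.

Lemma mv_scale (P : mat R N n) (h : vec R n) t a : mv P (fun i => t * h i) a = t * mv P h a.
Proof. by rewrite /mv mulr_sumr; apply: eq_bigr => i _; ring. Qed.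

Lemma quad_scale (X : arr R N n) (h : vec R n) t a :
  quad X (fun i => t * h i) a = t ^+ 2 * quad X h a.
Proof.
rewrite /quad mulr_sumr; apply: eq_bigr => i _; rewrite mulr_sumr; apply: eq_bigr => j _; ring.
Qed.

Lemma mv_delta (P : mat R N n) i a : mv P (fun l => (l == i)%:R) a = P (a, i).
Proof. by rewrite /mv sum_delta. Qed.

Definition bil (X : arr R N n) (a : 'I_N) (x y : vec R n) :=
  \sum_(k < n) \sum_(l < n) X (a, k, l) * x k * y l.

Lemma bil_add (X : arr R N n) a (x y : vec R n) :
  quad X (fun l => x l + y l) a = bil X a x x + bil X a x y + bil X a y x + bil X a y y.
Proof.
rewrite /quad /bil -!big_split; apply: eq_bigr => k _ /=.
rewrite -!big_split; apply: eq_bigr => l _ /=; ring.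
Qed.

Lemma bil_delta (X : arr R N n) a i j :
  bil X a (fun l => (l == i)%:R) (fun l => (l == j)%:R) = X (a, i, j).
Proof.
rewrite /bil.
transitivity (\sum_(k < n) X (a, k, j) * (k == i)%:R); last by rewrite sum_delta.
apply: eq_bigr => k _.
rewrite -(sum_delta (fun l => X (a, k, l) * (k == i)%:R) j).
by apply: eq_bigr => l _; ring.
Qed.

Lemma ell_sum (c : vec R N) (B : arr R N n) (h : vec R n) :
  \sum_(i < n) \sum_(j < n) (\sum_(a < N) c a * B (a, i, j)) * h i * h j
  = \sum_(a < N) c a * quad B h a.
Proof.
transitivity (\sum_(i < n) \sum_(j < n) \sum_(a < N) c a * (B (a, i, j) * h i * h j)).
  apply: eq_bigr => i _; apply: eq_bigr => j _; rewrite !mulr_suml; apply: eq_bigr => a _; ring.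
rewrite (eq_bigr (fun i => \sum_(a < N) \sum_(j < n) c a * (B (a, i, j) * h i * h j))); last first.
  by move=> i _; rewrite exchange_big.
rewrite exchange_big; apply: eq_bigr => a _; rewrite /quad mulr_sumr; apply: eq_bigr => i _.
by rewrite mulr_sumr; apply: eq_bigr => j _; ring.
Qed.

Lemma polar (B : arr R N n) : symarr B -> (forall h a, quad B h a = 0) -> B = (fun _ => 0).
Proof.
move=> sB hq; apply: funext => [[[a i] j]].
have h1 := hq (fun l => (l == i)%:R + (l == j)%:R) a.
rewrite bil_add !bil_delta in h1.
have h2 := hq (fun l => (l == i)%:R) a.
have h3 := hq (fun l => (l == j)%:R) a.
rewrite /quad in h2 h3.
have e2 : \sum_(k < n) \sum_(l < n) B (a, k, l) * (k == i)%:R * (l == i)%:R = B (a, i, i).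
  exact: (bil_delta B a i i).
have e3 : \sum_(k < n) \sum_(l < n) B (a, k, l) * (k == j)%:R * (l == j)%:R = B (a, j, j).
  exact: (bil_delta B a j j).
rewrite e2 in h2; rewrite e3 in h3.
have := sB a i j; lra.
Qed.

End PartB1.

Section PartB2.
Variable R : realType.
Variables N n : nat.

Lemma gam0 (xi : vec R N) : gam xi (fun _ => 0) = 0.
Proof.
rewrite /gam /nrm /dot !big1 ?sqrtr0 ?addr0 // => i _; by rewrite ?expr0n ?mulr0.
Qed.

Lemma jet_step2 (Om : vec R n -> Prop) (u : vec R n -> vec R N) (Du : vec R n -> mat R N n)
  (Dv : arr R N n) y (xi : vec R N) (P : mat R N n) (X : arr R N n) :
  is_open Om -> Om y -> nrm xi = 1 -> twice_diff_at u y Du Dv -> jet2 Om u xi y P X ->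
  forall eps, 0 < eps -> exists del, 0 < del /\ forall h : vec R n, nrm h < del ->
    gam xi (fun a => mv (fun p => Du y p - P p) h a + 2^-1 * quad (fun t => Dv t - X t) h a)
      <= eps * nrm h ^+ 2.
Proof.
move=> hO Omy hxi htd [sX [T [Tsym [Tcont [hT0 [d [d0 hcon]]]]]]] eps eps0.
have Tay := twice_taylor htd.
have [rho [rho0 hrho]] := hO y Omy.
pose NN : R := N%:R * N%:R.
have NN0 : 0 <= NN by rewrite mulr_ge0.
have e4 : 0 < eps / 4 by rewrite divr_gt0.
have [d1 [d10 hd1]] := Tay _ e4.
have e4N : 0 < eps / (4 * NN + 1) by rewrite divr_gt0 // ltr_pwDr // mulr_ge0.
have [d2 [d20 hd2]] := hT0 _ e4N.
have [m1 [m10 [m11 m12]]] := small2 rho0 d0.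
have [m2 [m20 [m21 m22]]] := small2 d10 d20.
have [del [del0 [del1 del2]]] := small2 m10 m20.
exists del; split => // h hh.
have [hz|hnz] := pselect (h = @zerov R 'I_n).
  have -> : (fun a => mv (fun p => Du y p - P p) h a + 2^-1 * quad (fun t => Dv t - X t) h a)
      = (fun _ => 0).
    apply: funext => a; rewrite /mv /quad hz /zerov !big1 ?mulr0 ?addr0 // => i _.
      by rewrite big1 // => j _; rewrite !mulr0.
    by rewrite mulr0.
  by rewrite gam0 mulr_ge0 ?sqr_ge0 // ltW.
pose z := fun i => y i + h i.
have vz : vsub z y = h by apply: funext => i; rewrite /vsub /z; ring.
have dz : dist z y = nrm h by rewrite /dist vz.
have Omz : Om z by apply: hrho; rewrite dz; lra.
have zny : z <> y.
  move=> e; apply: hnz; rewrite -vz e; apply: funext => i; by rewrite /vsub subrr.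
have dzd : dist z y < d by rewrite dz; lra.
have hc := hcon z Omz zny dzd.
rewrite vz in hc.
set w := (fun a => u z a - u y a - mv P h a - 2^-1 * quad X h a) in hc.
set M := mxscale (nrm h ^+ 2) (T h) in hc.
have nM : nrm M = nrm h ^+ 2 * nrm (T h).
  by rewrite /M /mxscale nrm_scale ger0_norm ?sqr_ge0.
have hTh := hd2 h hnz (lt_le_trans hh (le_trans del2 m22)).
have K0 : 0 <= N%:R * (N%:R * nrm M) by rewrite !mulr_ge0 ?nrm_ge0.
have hgw : gam xi w <= 2 * (N%:R * (N%:R * nrm M)).
  apply: gam_bound => // v.
  apply: le_trans (hc v) _.
  apply: le_trans (ler_norm _) _; apply: le_trans (qform_bound _ _) _.
  by rewrite !mulrA.
have dzd1 : dist z y < d1 by rewrite dz; lra.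
have hE := hd1 z dzd1.
rewrite vz dz in hE.
have hl := gam_lip (fun a => mv (fun p => Du y p - P p) h a + 2^-1 * quad (fun t => Dv t - X t) h a) w hxi.
have eD : dist (fun a => mv (fun p => Du y p - P p) h a + 2^-1 * quad (fun t => Dv t - X t) h a) w
   = nrm (fun a => u z a - u y a - mv (Du y) h a - 2^-1 * quad Dv h a).
  rewrite /dist -nrm_opp; apply: nrm_ext => a; rewrite /vsub /w mv_sub quad_sub; ring.
rewrite eD in hl.
have b1 : 2 * (N%:R * (N%:R * nrm M)) <= eps / 2 * nrm h ^+ 2.
  rewrite nM.
  have nh0 : 0 <= nrm h ^+ 2 by rewrite sqr_ge0.
  have hT' : nrm (T h) <= eps / (4 * NN + 1) by exact: ltW.
  have : 2 * NN * nrm (T h) <= eps / 2.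
    apply: le_trans (_ : 2 * NN * (eps / (4 * NN + 1)) <= _).
      by apply: ler_wpM2l => //; rewrite mulr_ge0.
    rewrite mulrA ler_pdivrMr ?ltr_pwDr ?mulr_ge0 //.
    rewrite (_ : eps / 2 * (4 * NN + 1) = 2 * NN * eps + eps / 2); last by field.
    by rewrite lerDl ltW // divr_gt0.
  move=> h2.
  have := ler_wpM2r nh0 h2.
  rewrite /NN; move=> h3; apply: le_trans _ h3; rewrite le_eqVlt; apply/orP; left; apply/eqP; ring.
lra.
Qed.

Lemma jet_pos (Om : vec R n -> Prop) (F : vec R n -> vec R N -> mat R N n -> arr R N n -> vec R N)
  (u : vec R n -> vec R N) (Du : vec R n -> mat R N n)
  (Dv : arr R N n) y (xi : vec R N) (P : mat R N n) (X : arr R N n) :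
  is_open Om -> Om y -> nrm xi = 1 -> twice_diff_at u y Du Dv ->
  (forall a, F y (u y) (Du y) Dv a = 0) -> degenerate_elliptic Om F ->
  jet2 Om u xi y P X -> 0 <= dot xi (F y (u y) P X).
Proof.
move=> hO Omy hxi htd hF0 hEll hj.
have S2 := jet_step2 hO Omy hxi htd hj.
have sX : symarr X by case: hj.
have sDv := twice_sym htd.
pose A := fun p => Du y p - P p.
pose B := fun t => Dv t - X t.
have S3 : forall h : vec R n,
   gam xi (fun a => mv A h a) <= 0 /\
   ((forall a, mv A h a = 0) -> gam xi (fun a => 2^-1 * quad B h a) <= 0).
  move=> h; apply: (@ptq R N xi _ _ (nrm h ^+ 2) hxi (sqr_ge0 _)).
  move=> eps eps0; have [del [del0 hd]] := S2 eps eps0.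
  have C0 : 0 < nrm h + 1 by have := nrm_ge0 h; lra.
  exists (del / (nrm h + 1)); split; first by rewrite divr_gt0.
  move=> t t0 tl.
  have ht : nrm (fun i => t * h i) < del.
    rewrite nrm_scale gtr0_norm //.
    apply: le_lt_trans (_ : t * (nrm h + 1) < del); last by rewrite -ltr_pdivlMr.
    by apply: ler_wpM2l; [exact: ltW | rewrite lerDl].
  have := hd _ ht.
  rewrite nrm_scale gtr0_norm // => hh.
  have -> : (fun a => t * mv A h a + t ^+ 2 * (2^-1 * quad B h a))
      = (fun a => mv (fun p => Du y p - P p) (fun i => t * h i) a
                   + 2^-1 * quad (fun t => Dv t - X t) (fun i => t * h i) a).
    by apply: funext => a; rewrite mv_scale quad_scale /A /B; ring.
  apply: le_trans hh _; rewrite le_eqVlt; apply/orP; left; apply/eqP; ring.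
have hA : forall a i, A (a, i) = 0.
  move=> a i.
  have [g1 _] := S3 (fun l => (l == i)%:R).
  have [g2 _] := S3 (fun l => -1 * (l == i)%:R).
  have e1 : (fun a => mv A (fun l => (l == i)%:R) a) = (fun a => A (a, i)).
    by apply: funext => b; rewrite mv_delta.
  have e2 : (fun a => mv A (fun l => -1 * (l == i)%:R) a) = (fun a => - A (a, i)).
    by apply: funext => b; rewrite mv_scale mv_delta mulN1r.
  rewrite e1 in g1; rewrite e2 in g2.
  move: g1 g2; rewrite /gam nrm_opp.
  have -> : dot xi (fun a => - A (a, i)) = - dot xi (fun a => A (a, i)).
    by rewrite /dot -sumrN; apply: eq_bigr => b _; ring.
  move=> g1 g2.
  have n0 : nrm (fun a => A (a, i)) = 0.
    apply/le_anti; rewrite nrm_ge0 andbT; lra.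
  exact: (nrm_eq0 n0 a).
have hP : P = Du y.
  apply: funext => -[a i]; have := hA a i; rewrite /A => /eqP; rewrite subr_eq0 => /eqP; by [].
have hq : forall h : vec R n, gam xi (fun a => 2^-1 * quad B h a) <= 0.
  move=> h; apply: (S3 h).2 => a; rewrite /mv big1 // => i _; by rewrite hA mul0r.
have hell : forall h : vec R n,
    0 <= 2 * nrm (fun a => 2^-1 * quad B h a) * dot xi (F y (u y) P X).
  move=> h.
  have := hEll y (u y) P Dv X Omy sDv sX h.
  have := ell_sum (fun a => F y (u y) P Dv a - F y (u y) P X a) B h.
  rewrite /B /= => ->.
  have qv := gam_nonpos hxi (hq h).
  set nq := nrm (fun a => 2^-1 * quad B h a) in qv |- *.
  have -> : \sum_(a < N) (F y (u y) P Dv a - F y (u y) P X a) * quad (fun t => Dv t - X t) h a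
       = \sum_(a < N) (2 * nq) * (xi a * F y (u y) P X a).
    apply: eq_bigr => a _.
    have := qv a; rewrite /B /= => qa.
    have -> : quad (fun t => Dv t - X t) h a = 2 * (2^-1 * quad (fun t => Dv t - X t) h a) by field.
    by rewrite qa hP hF0; ring.
  by rewrite -mulr_sumr.
have [[h hpos]|hno] := pselect (exists h : vec R n, 0 < nrm (fun a => 2^-1 * quad B h a)).
  have := hell h; rewrite pmulr_rge0 // mulr_gt0 //.
have hz : forall h a, quad B h a = 0.
  move=> h a.
  have n0 : nrm (fun a => 2^-1 * quad B h a) = 0.
    apply/le_anti; rewrite nrm_ge0 andbT leNgt; apply/negP => hp; apply: hno; by exists h.
  have := nrm_eq0 n0 a; rewrite /= => /eqP; rewrite mulf_eq0 invr_eq0 pnatr_eq0 /= => /eqP; by [].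
have sB : symarr B by move=> a i j; rewrite /B sDv sX.
have B0 := polar sB hz.
have hXD : X = Dv.
  apply: funext => t; have := congr1 (fun f => f t) B0; rewrite /B /= => /eqP.
  by rewrite subr_eq0 => /eqP.
rewrite hXD hP /dot big1 // => a _; by rewrite hF0 mulr0.
Qed.

End PartB2.

Section PartB3.
Variable R : realType.
Variables N n : nat.

Lemma ereal_ge0_eps (s : \bar R) : (forall eta : R, 0 < eta -> ((- eta)%:E <= s)%E) -> (0 <= s)%E.
Proof.
case: s => [r| |] h.
- rewrite lee_fin; apply/ler_addgt0Pr => eta eta0.
  have := h eta eta0; rewrite lee_fin; lra.
- by [].
- by have := h 1 ltr01.
Qed.

Lemma seq_eventually (T : finType) (s : nat -> T -> R) l e : seqcv s l -> 0 < e ->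
  exists M, forall m, (M <= m)%N -> dist (s m) l < e.
Proof. by move=> h e0; apply: h. Qed.

Lemma part_b (Om : vec R n -> Prop) (F : vec R n -> vec R N -> mat R N n -> arr R N n -> vec R N)
  (u : vec R n -> vec R N) :
  is_open Om -> loc_bounded Om F -> cont_on Om u ->
  (exists (Du : vec R n -> mat R N n) (D2 : vec R n -> arr R N n),
      (forall x, Om x -> twice_diff_at u x Du (D2 x)) /\
      (forall x, Om x -> forall a, F x (u x) (Du x) (D2 x) a = 0)) ->
  degenerate_elliptic Om F -> contact_sol Om F u.
Proof.
move=> hO hLB hU [Du [D2 [htd hF0]]] hEll x xi P X Omx hxi
  [xis [xs [Ps [Xs [hm [cxi [cx [cP cX]]]]]]]].
have pos : forall m, 0 <= dot (xis m) (F (xs m) (u (xs m)) (Ps m) (Xs m)).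
  move=> m; have [h1 [h2 h3]] := hm m.
  exact: (jet_pos hO h2 h1 (htd _ h2) (hF0 _ h2) hEll h3).
have sX : symarr X.
  move=> a i j; apply/eqP; rewrite -subr_eq0 -normr_le0.
  apply/ler_addgt0Pr => eps eps0; rewrite add0r.
  have e2 : 0 < eps / 2 by rewrite divr_gt0.
  have [M hM] := cX _ e2.
  have hd := hM M (leqnn M).
  have [_ [_ [sXm _]]] := hm M.
  have d1 := dist_abs (Xs M) X (a, i, j).
  have d2 := dist_abs (Xs M) X (a, j, i).
  rewrite (sXm a i j) in d1.
  move: d1 d2 => /ler_normlP [d1a d1b] /ler_normlP [d2a d2b].
  rewrite Num.Theory.ler_norml; apply/andP; split; lra.
have [e0 [Mb [e00 hMb]]] := hLB x (u x) P X Omx sX.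
rewrite /env; apply: le_ereal_inf_tmp => _ [e epos <-].
apply: ereal_ge0_eps => eta eta0.
have [e1 [e10 [e11 e12]]] := small2 epos e00.
have e14 : 0 < e1 / 4 by rewrite divr_gt0.
have [du [du0 hdu]] := hU x Omx _ e14.
have [m0 [m00 [m01 m02]]] := small2 e14 du0.
have Mb1 : 0 < `|Mb| + 1 by rewrite ltr_pwDr.
have [M1 hM1] := cx _ m00.
have [M2 hM2] := cP _ e14.
have [M3 hM3] := cX _ e14.
have [M4 hM4] := cxi _ (divr_gt0 eta0 Mb1).
pose m := maxn (maxn M1 M2) (maxn M3 M4).
have l1 : (M1 <= m)%N by rewrite /m !leq_max leqnn.
have l2 : (M2 <= m)%N by rewrite /m !leq_max leqnn !orbT.
have l3 : (M3 <= m)%N by rewrite /m !leq_max leqnn !orbT.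
have l4 : (M4 <= m)%N by rewrite /m !leq_max leqnn !orbT.
have h1 := hM1 m l1; have h2 := hM2 m l2; have h3 := hM3 m l3; have h4 := hM4 m l4.
have [_ [Omm [sXm _]]] := hm m.
have h5 := hdu (xs m) Omm (lt_le_trans h1 m02).
rewrite dist_sym in h1; rewrite dist_sym in h2; rewrite dist_sym in h3; rewrite dist_sym in h5.
have hsum : dist x (xs m) + dist (u x) (u (xs m)) + dist P (Ps m) + dist X (Xs m) <= e1.
  have := ltW (lt_le_trans h1 m01); lra.
have hF := hMb (xs m) (u (xs m)) (Ps m) (Xs m) Omm sXm (le_trans hsum e12).
apply: (@le_trans _ _ ((dot xi (F (xs m) (u (xs m)) (Ps m) (Xs m)))%:E)); last first.
  apply: ereal_sup_ubound.
  by exists (xs m), (u (xs m)), (Ps m), (Xs m); split => //; split => //; split => //; exact: le_trans hsum e11.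
rewrite lee_fin.
set Fm := F (xs m) (u (xs m)) (Ps m) (Xs m).
have ed : dot xi Fm = dot (xis m) Fm + \sum_(i < N) vsub xi (xis m) i * Fm i.
  by rewrite /dot -big_split /=; apply: eq_bigr => i _; rewrite /vsub; ring.
have hdl := dot_le (vsub xi (xis m)) Fm.
have pm := pos m; rewrite -/Fm in pm.
rewrite -/(dist xi (xis m)) dist_sym in hdl.
have nF0 := nrm_ge0 Fm.
have hb : dist (xis m) xi * nrm Fm <= eta.
  apply: le_trans (_ : eta / (`|Mb| + 1) * (`|Mb| + 1) <= eta); last by rewrite divfK ?gt_eqF.
  apply: ler_pM => //; [exact: dist_ge0 | exact: ltW | apply: le_trans hF _].
  apply: le_trans (ler_norm _) _; lra.
move: hdl => /ler_normlP [hda hdb].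
lra.
Qed.

End PartB3.


Local Close Scope classical_set_scope.
Unset Implicit Arguments.

Theorem theorem22 (R : realType) (n N : nat) (Om : vec R n -> Prop)
    (F : vec R n -> vec R N -> mat R N n -> arr R N n -> vec R N) (u : vec R n -> vec R N) :
  is_open Om -> loc_bounded Om F -> cont_on Om u ->
  (* (a) *)
  (contact_sol Om F u -> F_continuous Om F ->
     forall (x : vec R n) (Du : vec R n -> mat R N n) (D2 : arr R N n),
       Om x -> twice_diff_at u x Du D2 -> forall a, F x (u x) (Du x) D2 a = 0) /\
  (* (b) *)
  ((exists (Du : vec R n -> mat R N n) (D2 : vec R n -> arr R N n),
      (forall x, Om x -> twice_diff_at u x Du (D2 x)) /\
      (forall x, Om x -> forall a, F x (u x) (Du x) (D2 x) a = 0)) ->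
   degenerate_elliptic Om F -> contact_sol Om F u).
Proof.
move=> hO hLB hU; split.
  move=> hcs hFc x Du D2 Omx htd a; exact: (part_a hcs hFc Omx htd a).
move=> hex hEll; exact: (part_b hO hLB hU hex hEll).
Qed.
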